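(* Let $(X,d_X)$ and $(Y,d_Y)$ be compact metric spaces and let $f:X\to Y$ be Rakotch contracting. Then the induced map $Pf:(PX,d_{PX})\to(PY,d_{PY})$ is Rakotch contracting.
   Context: For a compact metric space $(X,d_X)$, $PX$ denotes the space of Borel probability measures on $X$ with the metric $d_{PX}(\mu,\eta)=\inf\{\int_{X\times X}d_X(x,y)\,d\lambda:\lambda\in\mathcal B(\mu,\eta)\}$, where $\mathcal B(\mu,\eta)$ is the set of Borel probability measures $\lambda$ on $X\times X$ whose images under the first and second coordinate projections are $\mu$ and $\eta$ respectively. For continuous $f:X\to Y$, $Pf:PX\to PY$ is given by $Pf(\mu)(B)=\mu(f^{-1}(B))$ for Borel $B\subset Y$. A map $g:(X,d_X)\to(Y,d_Y)$ is Rakotch contracting if there is $\varphi:[0,\infty)\to[0,\infty)$ with $d_Y(g(x),g(x'))\le\varphi(d_X(x,x'))$ for all $x,x'$ and $\sup_{a<t<\infty}\varphi(t)/t<1$ for every $a>0$. *)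

(* Defs.v *)
From HB Require Import structures.
From mathcomp Require Import all_boot all_order all_algebra.
From mathcomp Require Import all_classical all_reals all_analysis.
Set Implicit Arguments. Unset Strict Implicit. Unset Printing Implicit Defensive.
Import Order.TTheory GRing.Theory Num.Theory.
Local Open Scope classical_set_scope.
Local Open Scope ring_scope.

Section MetricDefs.
Variable R : realType.

Definition is_metric (X : Type) (d : X -> X -> R) : Prop :=
  [/\ (forall x y, 0 <= d x y),
      (forall x y, d x y = 0 <-> x = y),
      (forall x y, d x y = d y x) &
      (forall x y z, d x z <= d x y + d y z)].

Definition mball (X : Type) (d : X -> X -> R) (x : X) (r : R) : set X :=
  [set y | d x y < r].

Definition mopen (X : Type) (d : X -> X -> R) (A : set X) : Prop :=
  forall x, A x -> exists2 r : R, 0 < r & mball d x r `<=` A.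

Definition mcompact (X : Type) (d : X -> X -> R) : Prop :=
  forall C : set (set X), (forall U, C U -> mopen d U) ->
    setT `<=` \bigcup_(U in C) U ->
    exists (n : nat) (U : nat -> set X),
      (forall i, (i < n)%N -> C (U i)) /\
      setT `<=` \bigcup_(i in [set i | (i < n)%N]) U i.

Definition dprod (X Y : Type) (dX : X -> X -> R) (dY : Y -> Y -> R)
  (z z' : X * Y) : R := Num.max (dX z.1 z'.1) (dY z.2 z'.2).

Definition Borel (X : pointedType) (d : X -> X -> R) :=
  g_sigma_algebraType (mopen d).

(* PX : Borel probability measures on X, seen as set functions *)
Definition Prob (X : pointedType) (d : X -> X -> R) : set (set X -> \bar R) :=
  [set m | exists P : probability (Borel d) R,
    forall A : set (Borel d), measurable A -> P A = m A].

Definition couplings (X : pointedType) (d : X -> X -> R)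
  (mu eta : set X -> \bar R) : set (probability (Borel (dprod d d)) R) :=
  [set lam | (forall A : set (Borel d), measurable A ->
                 lam (fst @^-1` A) = mu A) /\
             (forall A : set (Borel d), measurable A ->
                 lam (snd @^-1` A) = eta A)].
Arguments couplings {X} d mu eta.

(* Kantorovich metric d_PX (finite for compact X) *)
Definition dP (X : pointedType) (d : X -> X -> R)
  (mu eta : set X -> \bar R) : R :=
  fine (ereal_inf
    ((fun lam : probability (Borel (dprod d d)) R =>
        (\int[lam]_(z in setT) ((d z.1 z.2)%:E))%E) @` couplings d mu eta)).

Definition Pf (X Y : Type) (f : X -> Y) (mu : set X -> \bar R) :
  set Y -> \bar R := fun B => mu (f @^-1` B).

Definition rakotch_on (S T : Type) (A : set S) (B : set T)
  (dA : S -> S -> R) (dB : T -> T -> R) (g : S -> T) : Prop :=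
  (forall x, A x -> B (g x)) /\
  exists phi : R -> R,
    [/\ (forall t, 0 <= t -> 0 <= phi t),
        (forall x x', A x -> A x' -> dB (g x) (g x') <= phi (dA x x')) &
        (forall a, 0 < a -> exists2 c : R, c < 1 &
            forall t, a < t -> phi t / t <= c)].

Definition rakotch (S T : Type) (dA : S -> S -> R) (dB : T -> T -> R)
  (g : S -> T) : Prop := rakotch_on setT setT dA dB g.

End MetricDefs.

(* Main.v *)
Require Import Defs.
From HB Require Import structures.
From mathcomp Require Import all_boot all_order all_algebra.
From mathcomp Require Import all_classical all_reals all_analysis.
From mathcomp Require Import measurable_realfun.
From mathcomp Require Import ring lra.
Import Order.TTheory GRing.Theory Num.Theory.
Local Open Scope classical_set_scope.
Local Open Scope ring_scope.

Section Helpers.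
Variable R : realType.

Lemma mopen_meas (Z : pointedType) (dZ : Z -> Z -> R) (A : set Z) :
  mopen dZ A -> measurable (A : set (Borel dZ)).
Proof. by move=> oA; apply: sub_sigma_algebra. Qed.

Lemma lip_meas (Z W : pointedType) (dZ : Z -> Z -> R) (dW : W -> W -> R)
  (g : Z -> W) : (forall z z', dW (g z) (g z') <= dZ z z') ->
  measurable_fun setT (g : Borel dZ -> Borel dW).
Proof.
move=> lg; apply: (@measurability _ _ (Borel dZ) (Borel dW) _ _ (mopen dW)) => //.
move=> _ [B oB <-]; rewrite setTI; apply: mopen_meas.
move=> z Bgz; have [r r0 sB] := oB _ Bgz; exists r => // z' zz'.
apply: sB; rewrite /mball /=; exact: (le_lt_trans (lg z z')).
Qed.

Arguments lip_meas {Z W dZ dW g}.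

Lemma real_meas (Z : pointedType) (dZ : Z -> Z -> R) (h : Z -> R) (K : R) :
  0 < K -> (forall z z', h z - h z' <= K * dZ z z') ->
  measurable_fun setT (h : Borel dZ -> R).
Proof.
move=> K0 lh; apply: (measurability _ (RGenOInfty.measurableE R)) => //.
move=> _ [_ [x ->] <-]; rewrite setTI; apply: mopen_meas.
move=> z /=; rewrite in_itv /= andbT => xz.
exists ((h z - x) / K); first by rewrite divr_gt0 // subr_gt0.
move=> z'; rewrite /mball /= in_itv /= andbT => hz'.
have := lh z z'; rewrite ltr_pdivlMr // in hz'.
rewrite mulrC in hz'. lra.
Qed.

Lemma term_le_sum (F : nat -> R) n i : (forall j, 0 <= F j) -> (i < n)%N ->
  F i <= \sum_(j < n) F j.
Proof.
move=> F0; elim: n => [//|n IH] lt_in.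
rewrite big_ord_recr /=; rewrite ltnS leq_eqVlt in lt_in.
case/orP: lt_in => [/eqP ->|lin].
  by rewrite lerDr; apply: sumr_ge0.
by rewrite (le_trans (IH lin)) // lerDl.
Qed.

Lemma mball_open (Z : Type) (dZ : Z -> Z -> R) z r : is_metric dZ ->
  mopen dZ (mball dZ z r).
Proof.
case=> d0 d_eq d_sym d_tri y; rewrite /mball /= => zy.
exists (r - dZ z y); first by rewrite subr_gt0.
move=> w; rewrite /mball /= => yw; have := d_tri z y w; lra.
Qed.

Lemma cpt_bound (Z : pointedType) (dZ : Z -> Z -> R) : is_metric dZ ->
  mcompact dZ -> exists2 D, 0 <= D & forall z z', dZ z z' <= D.
Proof.
move=> mZ cZ; have [d0 d_eq d_sym d_tri] := mZ.
have [|| n [U [CU cov]]] := cZ [set B | exists y, B = mball dZ y 1].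
- by move=> _ [y ->]; apply: mball_open.
- move=> z _; exists (mball dZ z 1); first by exists z.
  by rewrite /mball /= (proj2 (d_eq z z) erefl).
have : forall i, exists y : Z, (i < n)%N -> U i = mball dZ y 1.
  move=> i; case: (ltnP i n) => lin; last by exists point.
  by have [y ->] := CU i lin; exists y.
case/choice => yy hyy.
pose S := \sum_(i < n) \sum_(j < n) dZ (yy i) (yy j).
have S0 : 0 <= S by apply: sumr_ge0 => i _; apply: sumr_ge0.
exists (2 + S); first lra.
move=> z z'.
have [i /= lin Uz] := cov z I; have [j /= ljn Uz'] := cov z' I.
rewrite hyy // /mball /= in Uz; rewrite hyy // /mball /= in Uz'.
have h1 : dZ (yy i) (yy j) <= S.
  have h2 := @term_le_sum (fun j => dZ (yy i) (yy j)) n j (fun k => d0 _ _) ljn.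
  have h3 := @term_le_sum (fun i => \sum_(j < n) dZ (yy i) (yy j)) n i
    (fun k => sumr_ge0 _ (fun j _ => d0 _ _)) lin.
  rewrite /S; simpl in h2, h3; lra.
have := d_tri z (yy i) z'; have := d_tri (yy i) (yy j) z'.
rewrite (d_sym z (yy i)); lra.
Qed.

Lemma dist_meas (Z : pointedType) (dZ : Z -> Z -> R) : is_metric dZ ->
  measurable_fun [set: Borel (dprod dZ dZ)] (fun z => (dZ z.1 z.2)%:E).
Proof.
case=> d0 d_eq d_sym d_tri; apply/measurable_EFinP.
apply: (@real_meas _ (dprod dZ dZ) _ 2) => // z z'.
rewrite /dprod.
have m1 : dZ z.1 z'.1 <= Num.max (dZ z.1 z'.1) (dZ z.2 z'.2) by rewrite le_max lexx.
have m2 : dZ z.2 z'.2 <= Num.max (dZ z.1 z'.1) (dZ z.2 z'.2)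
  by rewrite le_max lexx orbT.
have := d_tri z.1 z'.1 z.2; have := d_tri z'.1 z'.2 z.2.
rewrite (d_sym z'.2 z.2); lra.
Qed.

Lemma fine_le0 (x : \bar R) K : (0 <= x)%E -> (x <= K%:E)%E -> fine x <= K.
Proof. by case: x => [r| |] //=; rewrite lee_fin. Qed.

Lemma dP_bound (Z : pointedType) (dZ : Z -> Z -> R) D : is_metric dZ ->
  0 <= D -> (forall z z', dZ z z' <= D) -> forall mu eta, dP dZ mu eta <= D.
Proof.
move=> mZ D0 bD mu eta; rewrite /dP.
set S := (X in ereal_inf X).
case E: (ereal_inf S) => [r| |] //=.
have : (ereal_inf S < +oo)%E by rewrite E ltry.
case/ereal_inf_lt => _ [lam clam <-] _.
rewrite -lee_fin -E; apply: ge_ereal_inf.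
exists (\int[lam]_(z in setT) (dZ z.1 z.2)%:E)%E; first by exists lam.
apply: (@le_trans _ _ (\int[lam]_(z in setT) (cst D%:E) z)%E).
  apply: ge0_le_integral => //.
  - by move=> z _; rewrite lee_fin; case: mZ.
  - exact: dist_meas.
  - by move=> z _; rewrite lee_fin.
rewrite integral_cst // [X in (_ * X)%E](_ : _ = 1%E) ?mule1 //; exact: probability_setT.
Qed.

Definition mkm d d' (T : measurableType d) (T' : measurableType d') (g : T -> T')
  (mg : measurable_fun setT g) : {mfun T >-> T'} :=
  HB.pack g (isMeasurableFun.Build _ _ _ _ g mg).

Arguments mkm {d d' T T' g}.

Lemma ff_lip (X Y : pointedType) (dX : X -> X -> R) (dY : Y -> Y -> R) (f : X -> Y) :
  (forall x x', dY (f x) (f x') <= dX x x') ->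
  forall z z', dprod dY dY (f z.1, f z.2) (f z'.1, f z'.2) <= dprod dX dX z z'.
Proof.
move=> lf z z'; rewrite /dprod /= ge_max !le_max.
by rewrite (lf z.1 z'.1) (lf z.2 z'.2) orbT.
Qed.

Arguments ff_lip {X Y dX dY f}.

Lemma Pf_Prob (X Y : pointedType) (dX : X -> X -> R) (dY : Y -> Y -> R) (f : X -> Y)
  (lf : forall x x', dY (f x) (f x') <= dX x x') mu :
  Prob dX mu -> Prob dY (Pf f mu).
Proof.
case=> P hP.
exists (Probability.clone _ _ _ (distribution P (mkm (@lip_meas _ _ dX dY f lf))) _) => A mA.
rewrite /distribution /pushforward /Pf /= -hP //.
by rewrite -(setTI (f @^-1` A)); apply: (lip_meas lf).
Qed.

Lemma coupling_push (X Y : pointedType) (dX : X -> X -> R) (dY : Y -> Y -> R)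
  (f : X -> Y) (lf : forall x x', dY (f x) (f x') <= dX x x') mu eta lam :
  couplings (d:=dX) mu eta lam ->
  couplings (d:=dY) (Pf f mu) (Pf f eta)
    (distribution lam (mkm (@lip_meas _ _ (dprod dX dX) (dprod dY dY) _ (ff_lip lf)))).
Proof.
have mf : forall A : set (Borel dY), measurable A ->
    measurable (f @^-1` A : set (Borel dX)).
  by move=> A mA; rewrite -(setTI (f @^-1` A)); apply: (lip_meas lf).
case=> h1 h2; split => A mA; rewrite /distribution /pushforward /Pf /=.
- exact: (h1 _ (mf _ mA)).
- exact: (h2 _ (mf _ mA)).
Qed.

Lemma int_push (X Y : pointedType) (dX : X -> X -> R) (dY : Y -> Y -> R)
  (f : X -> Y) (lf : forall x x', dY (f x) (f x') <= dX x x') (mY : is_metric dY)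
  (lam : probability (Borel (dprod dX dX)) R) :
  (\int[distribution lam (mkm (@lip_meas _ _ (dprod dX dX) (dprod dY dY) _ (ff_lip lf)))]_(z in setT) (dY z.1 z.2)%:E
   = \int[lam]_(z in setT) (dY (f z.1) (f z.2))%:E)%E.
Proof.
rewrite /distribution ge0_integral_pushforward //.
- exact: dist_meas.
- by move=> z _; rewrite lee_fin; case: mY.
Qed.

End Helpers.
Arguments cpt_bound {R Z dZ}.
Arguments mkm {d d' T T' g}.
Arguments ff_lip {R X Y dX dY f}.
Arguments lip_meas {R Z W dZ dW g}.
Arguments dP_bound {R Z dZ D}.
Arguments Pf_Prob {R X Y dX dY f}.
Arguments coupling_push {R X Y dX dY f}.
Arguments int_push {R X Y dX dY f}.
Arguments fine_le0 {R}.
Arguments dist_meas {R Z dZ}.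

Theorem lemma2p1 (R : realType) (X Y : pointedType)
  (dX : X -> X -> R) (dY : Y -> Y -> R)
  (mX : is_metric dX) (mY : is_metric dY)
  (cX : mcompact dX) (cY : mcompact dY)
  (f : X -> Y) :
  rakotch dX dY f ->
  rakotch_on (Prob dX) (Prob dY) (dP dX) (dP dY) (Pf f).
Proof.
case=> _ [phi [phi0 hphi hc]].
have [dX0 dX_eq dX_sym dX_tri] := mX.
have [dY0 dY_eq dY_sym dY_tri] := mY.
have two0 : (0:R) < 2 by [].
have hphi' x x' : dY (f x) (f x') <= phi (dX x x') by exact: hphi.
have lf : forall x x', dY (f x) (f x') <= dX x x'.
  move=> x x'; have [d0|dpos] := eqVneq (dX x x') 0.
    by have -> := (proj1 (dX_eq x x') d0); rewrite (proj2 (dY_eq _ _) erefl).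
  have dgt : 0 < dX x x' by rewrite lt0r dpos dX0.
  have [c c1 hc'] := hc (dX x x' / 2) (divr_gt0 dgt two0).
  have := hc' (dX x x'); rewrite ltr_pdivrMr // ltr_pMr // ltr1n => /(_ isT).
  rewrite ler_pdivrMr // => h; have := hphi' x x'.
  have : c * dX x x' <= dX x x' by rewrite ler_piMl // ltW.
  lra.
have [D D0 bD] := cpt_bound mY cY.
pose C b := sup [set phi u / u | u in [set u | b < u]].
have hsup b : 0 < b -> has_sup [set phi u / u | u in [set u | b < u]].
  move=> b0; split; first by exists (phi (b + 1) / (b + 1)); exists (b + 1) => //=; lra.
  have [c _ hc'] := hc b b0; exists c => _ [u /= bu <-]; exact: hc'.
have hCub b u : 0 < b -> b < u -> phi u / u <= C b.
  by move=> b0 bu; rewrite /C; apply: (sup_upper_bound (hsup b b0)); exists u.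
have hC1 b : 0 < b -> exists2 c, c < 1 & C b <= c.
  move=> b0; have [c c1 hc'] := hc b b0; exists c => //.
  apply: ge_sup; first by exists (phi (b + 1) / (b + 1)); exists (b + 1) => //=; lra.
  by move=> _ [u /= bu <-]; exact: hc'.
have hC0 b : 0 < b -> 0 <= C b.
  move=> b0; apply: le_trans (hCub b (b + 1) b0 _); last lra.
  apply: divr_ge0; [apply: phi0|]; lra.
have hCmono a b : 0 < a -> a <= b -> C b <= C a.
  move=> a0 ab; apply: ge_sup.
    by exists (phi (b + 1) / (b + 1)); exists (b + 1) => //=; lra.
  by move=> _ [u /= bu <-]; apply: hCub => //; lra.
pose phi' (t : R) := if t <= 0 then D else t * (1 + C (t / 2)) / 2.
split; first by move=> mu; exact: Pf_Prob lf mu.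
exists phi'; split.
- move=> t t0; rewrite /phi'; case: ifPn => //; rewrite -ltNge => tp.
  have := hC0 (t / 2) (divr_gt0 tp two0).
  move=> h; apply: divr_ge0 => //; apply: mulr_ge0; lra.
- move=> mu eta Pmu Peta.
  rewrite {1}/phi'; case: ifPn => [_|]; first exact: dP_bound mY D0 bD _ _.
  rewrite -ltNge; set t := dP dX mu eta => tp.
  have t20 : 0 < t / 2 by exact: divr_gt0 tp two0.
  have Cb0 := hC0 _ t20.
  have [c c1 Cbc] := hC1 _ t20.
  set Cb := C (t / 2) in Cb0 Cbc *.
  have hpt z : dY (f z.1) (f z.2) <= Cb * dX z.1 z.2 + (1 - Cb) * (t / 2).
    have g1 := hphi' z.1 z.2; have g2 := lf z.1 z.2.
    have [dle|dgt] := leP (dX z.1 z.2) (t / 2).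
      have : 0 <= (1 - Cb) * (t / 2 - dX z.1 z.2) by apply: mulr_ge0; lra.
      lra.
    have : phi (dX z.1 z.2) / dX z.1 z.2 <= Cb by exact: hCub.
    rewrite ler_pdivrMr; last lra.
    have : 0 <= (1 - Cb) * (t / 2) by apply: mulr_ge0; lra.
    lra.
  move: (tp); rewrite /t /dP; set SX := (X in ereal_inf X).
  have SX0 : (0 <= ereal_inf SX)%E.
    apply: le_ereal_inf_tmp => _ [lam _ <-]; apply: integral_ge0 => z _.
    by rewrite lee_fin.
  case Einf: (ereal_inf SX) => [r| |] //=; [|by rewrite ltxx|by rewrite ltxx].
  move=> rpos; rewrite -/t.
  have rt : r = t by rewrite /t /dP -/SX Einf.
  apply/ler_addgt0Pr => e e0.
  have : (ereal_inf SX < (t + e)%:E)%E by rewrite Einf rt lte_fin ltrDl.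
  case/ereal_inf_lt => _ [lam clam <-] hlt.
  set s := (\int[lam]_(z in _) _)%E in hlt.
  have s0 : (0 <= s)%E by apply: integral_ge0 => z _; rewrite lee_fin.
  case Es: s hlt s0 => [sr| |] //= hlt s0; rewrite ?lte_fin ?lee_fin in hlt s0.
  have hint : (\int[lam]_(z in setT) (dY (f z.1) (f z.2))%:E <=
                (Cb * sr + (1 - Cb) * (t / 2))%:E)%E.
    apply: (@le_trans _ _ (\int[lam]_(z in setT)
        (Cb%:E * (dX z.1 z.2)%:E + ((1 - Cb) * (t / 2))%:E))%E).
      apply: ge0_le_integral => //.
      - by move=> z _; rewrite lee_fin.
        exact: (measurableT_comp (dist_meas mY)
          (@lip_meas _ _ _ (dprod dX dX) (dprod dY dY) (fun z => (f z.1, f z.2)) (ff_lip lf))).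
      - exact: (emeasurable_funD (measurable_funeM _ (dist_meas mX)) (measurable_cst _)).
      - by move=> z _; rewrite -EFinM -EFinD lee_fin.
    rewrite ge0_integralD //.
    - rewrite ge0_integralZl //; last first;
        [by move=> z _; rewrite lee_fin|exact: dist_meas mX|].
      rewrite -/s Es integral_cst // [X in (((1 - Cb) * (t / 2))%:E * X)%E](_ : _ = 1%E); last first.
        exact: probability_setT.
      by rewrite mule1 -EFinM -EFinD.
    - by move=> z _; apply: mule_ge0; rewrite lee_fin.
    - exact: measurable_funeM (dist_meas mX).
    - by move=> z _; rewrite lee_fin; apply: mulr_ge0; lra.
  have hY : dP dY (Pf f mu) (Pf f eta) <= Cb * sr + (1 - Cb) * (t / 2).
    rewrite /dP; apply: fine_le0.
      apply: le_ereal_inf_tmp => _ [lam' _ <-]; apply: integral_ge0 => z _.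
      by rewrite lee_fin.
    apply: ge_ereal_inf.
    exists (\int[lam]_(z in setT) (dY (f z.1) (f z.2))%:E)%E; last exact: hint.
    exists (distribution lam (mkm (@lip_meas _ _ _ (dprod dX dX) (dprod dY dY)
      (fun z => (f z.1, f z.2)) (ff_lip lf)))).
      exact: coupling_push lf _ _ _ clam.
    exact: int_push lf mY lam.
  have : Cb * sr <= Cb * (t + e) by apply: ler_wpM2l => //; lra.
  have : Cb * e <= e by rewrite ler_piMl //; lra.
  move=> h1 h2.
  have h3 : Cb * sr + (1 - Cb) * (t / 2) <= r * (1 + Cb) / 2 + e.
    rewrite rt; lra.
  exact: (le_trans hY h3).
- move=> a a0; have a20 : 0 < a / 2 by exact: divr_gt0 a0 two0.
  have [c c1 hCa] := hC1 _ a20.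
  exists ((1 + c) / 2); first lra.
  move=> t at_; have tp : 0 < t by lra.
  rewrite /phi' ifF; last by apply/negbTE; rewrite -ltNge.
  have -> : t * (1 + C (t / 2)) / 2 / t = (1 + C (t / 2)) / 2.
    by field; rewrite gt_eqF.
  have : C (t / 2) <= C (a / 2) by apply: hCmono => //; lra.
  lra.
Qed.
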